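(* Let $k\ge 2$, $h=3k+1$, and let $W\in\mathcal W^2_{h\times 4}$ be $2$-full. Then $W$ contains a bench with its seat in column $1$ and legs in column $2$, and a bench with its seat in column $4$ and legs in column $3$.
   Context: A 2-dimensional binary word of dimensions $h\times w$ is an $h\times w$ matrix with entries in $\{\square,\blacksquare\}$ (filled cells $\blacksquare$, empty cells $\square$). Two cells $(i,j),(i',j')$ are adjacent if $|i-i'|+|j-j'|=1$; the degree of a filled cell is the number of filled cells adjacent to it. $\mathcal W^2_{h\times w}$ is the set of $h\times w$ binary words in which every filled cell has degree at most $2$; $W$ is $2$-full if its number of filled cells is maximal in $\mathcal W^2_{h\times w}$. For columns $j,j'$ with $|j-j'|=1$, a bench with seat in column $j$ and legs in column $j'$ is given by integers $n\ge 3$ and $i$ with $1\le i\le i+n-1\le h$ such that the cells $(i,j),(i+1,j),\dots,(i+n-1,j)$ are all filled, the cells $(i,j')$ and $(i+n-1,j')$ are filled, and the cells $(i+1,j'),\dots,(i+n-2,j')$ are empty. *)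

(* Defs.v *)
From mathcomp Require Import all_boot.
Set Implicit Arguments. Unset Strict Implicit. Unset Printing Implicit Defensive.

(* A 2-dimensional binary word of dimensions h x w: filled cells are [true]. *)
Definition word (h w : nat) := {ffun 'I_h * 'I_w -> bool}.

(* 1-based access: [cell W i j] for 1 <= i <= h, 1 <= j <= w is the entry in
   row i, column j; out-of-range indices read as empty. *)
Definition cell h w (W : word h w) (i j : nat) : bool :=
  match insub i.-1, insub j.-1 with
  | Some a, Some b => (0 < i) && (0 < j) && W (a, b)
  | _, _ => false
  end.

Definition distn (a b : nat) : nat := (a - b) + (b - a).

Definition adjacent h w (p q : 'I_h * 'I_w) : bool :=
  distn p.1 q.1 + distn p.2 q.2 == 1.

Definition degree h w (W : word h w) (p : 'I_h * 'I_w) : nat :=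
  #|[set q | W q & adjacent p q]|.

Definition in_W2 h w (W : word h w) : bool :=
  [forall p, W p ==> (degree W p <= 2)].

Definition nfilled h w (W : word h w) : nat := #|[set p | W p]|.

Definition two_full h w (W : word h w) : Prop :=
  in_W2 W /\ forall W' : word h w, in_W2 W' -> nfilled W' <= nfilled W.

(* bench with seat in column j and legs in column j' (1-based), |j - j'| = 1 *)
Definition has_bench h w (W : word h w) (j j' : nat) : Prop :=
  exists n i, 3 <= n /\ 1 <= i /\ i + n - 1 <= h /\
    (forall t, t < n -> cell W (i + t) j) /\
    cell W i j' /\ cell W (i + n - 1) j' /\
    (forall t, 1 <= t -> t <= n - 2 -> ~~ cell W (i + t) j').

(* Main.v *)
Require Import Defs.
From mathcomp Require Import all_boot.
From mathcomp Require Import zify.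
From Stdlib Require Import Classical.
Set Implicit Arguments. Unset Strict Implicit. Unset Printing Implicit Defensive.


Definition rowT := (bool * bool * bool * bool)%type.
Definition r0 (r : rowT) := r.1.1.1.
Definition r1 (r : rowT) := r.1.1.2.
Definition r2 (r : rowT) := r.1.2.
Definition r3 (r : rowT) := r.2.
Definition rid (r : rowT) : nat := r0 r + 2 * r1 r + 4 * r2 r + 8 * r3 r.
Definition pcr (r : rowT) : nat := r0 r + r1 r + r2 r + r3 r.
Definition rempty : rowT := (false, false, false, false).
Definition mir (r : rowT) : rowT := (r3 r, r2 r, r1 r, r0 r).
Definition okrow (p c n : rowT) : bool :=
  [&& r0 c ==> (r0 p + r0 n + r1 c <= 2),
      r1 c ==> (r1 p + r1 n + r0 c + r2 c <= 2),
      r2 c ==> (r2 p + r2 n + r1 c + r3 c <= 2) &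
      r3 c ==> (r3 p + r3 n + r2 c <= 2)].
Definition nopen (sA sB : rowT -> bool) (c n : rowT) (o : bool) : bool :=
  [&& sA n, ~~ sB n, sA c & (sB c || o)].
Definition nph (ph : nat) : nat :=
  match ph with 1 => 2 | 2 => 3 | 3 => 5 | 4 => 5 | 5 => 6 | _ => 4 end.
Definition tabK := 17.
Definition tab : seq (seq (seq (seq nat))) := [::
[:: [:: [:: 0; 0; 0; 0; 0; 0; 0; 0; 0; 0; 0; 0; 0; 0; 0; 0];
   [:: 0; 0; 0; 0; 0; 0; 0; 0; 0; 0; 0; 0; 0; 0; 0; 0];
   [:: 0; 0; 0; 0; 0; 0; 0; 0; 0; 0; 0; 0; 0; 0; 0; 0];
   [:: 0; 0; 0; 0; 0; 0; 0; 0; 0; 0; 0; 0; 0; 0; 0; 0];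
   [:: 0; 0; 0; 0; 0; 0; 0; 0; 0; 0; 0; 0; 0; 0; 0; 0];
   [:: 0; 0; 0; 0; 0; 0; 0; 0; 0; 0; 0; 0; 0; 0; 0; 0];
   [:: 0; 0; 0; 0; 0; 0; 0; 0; 0; 0; 0; 0; 0; 0; 0; 0];
   [:: 0; 0; 0; 0; 0; 0; 0; 0; 0; 0; 0; 0; 0; 0; 0; 0];
   [:: 0; 0; 0; 0; 0; 0; 0; 0; 0; 0; 0; 0; 0; 0; 0; 0];
   [:: 0; 0; 0; 0; 0; 0; 0; 0; 0; 0; 0; 0; 0; 0; 0; 0];
   [:: 0; 0; 0; 0; 0; 0; 0; 0; 0; 0; 0; 0; 0; 0; 0; 0];
   [:: 0; 0; 0; 0; 0; 0; 0; 0; 0; 0; 0; 0; 0; 0; 0; 0];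
   [:: 0; 0; 0; 0; 0; 0; 0; 0; 0; 0; 0; 0; 0; 0; 0; 0];
   [:: 0; 0; 0; 0; 0; 0; 0; 0; 0; 0; 0; 0; 0; 0; 0; 0];
   [:: 0; 0; 0; 0; 0; 0; 0; 0; 0; 0; 0; 0; 0; 0; 0; 0];
   [:: 0; 0; 0; 0; 0; 0; 0; 0; 0; 0; 0; 0; 0; 0; 0; 0]];
  [:: [:: 0; 0; 0; 0; 0; 0; 0; 0; 0; 0; 0; 0; 0; 0; 0; 0];
   [:: 0; 0; 0; 0; 0; 0; 0; 0; 0; 0; 0; 0; 0; 0; 0; 0];
   [:: 0; 0; 0; 0; 0; 0; 0; 0; 0; 0; 0; 0; 0; 0; 0; 0];
   [:: 0; 0; 0; 0; 0; 0; 0; 0; 0; 0; 0; 0; 0; 0; 0; 0];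
   [:: 0; 0; 0; 0; 0; 0; 0; 0; 0; 0; 0; 0; 0; 0; 0; 0];
   [:: 0; 0; 0; 0; 0; 0; 0; 0; 0; 0; 0; 0; 0; 0; 0; 0];
   [:: 0; 0; 0; 0; 0; 0; 0; 0; 0; 0; 0; 0; 0; 0; 0; 0];
   [:: 0; 0; 0; 0; 0; 0; 0; 0; 0; 0; 0; 0; 0; 0; 0; 0];
   [:: 0; 0; 0; 0; 0; 0; 0; 0; 0; 0; 0; 0; 0; 0; 0; 0];
   [:: 0; 0; 0; 0; 0; 0; 0; 0; 0; 0; 0; 0; 0; 0; 0; 0];
   [:: 0; 0; 0; 0; 0; 0; 0; 0; 0; 0; 0; 0; 0; 0; 0; 0];
   [:: 0; 0; 0; 0; 0; 0; 0; 0; 0; 0; 0; 0; 0; 0; 0; 0];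
   [:: 0; 0; 0; 0; 0; 0; 0; 0; 0; 0; 0; 0; 0; 0; 0; 0];
   [:: 0; 0; 0; 0; 0; 0; 0; 0; 0; 0; 0; 0; 0; 0; 0; 0];
   [:: 0; 0; 0; 0; 0; 0; 0; 0; 0; 0; 0; 0; 0; 0; 0; 0];
   [:: 0; 0; 0; 0; 0; 0; 0; 0; 0; 0; 0; 0; 0; 0; 0; 0]]];
 [:: [:: [:: 9; 0; 0; 0; 0; 0; 0; 0; 0; 0; 0; 0; 0; 0; 0; 0];
   [:: 12; 0; 0; 0; 0; 0; 0; 0; 0; 0; 0; 0; 0; 0; 0; 0];
   [:: 12; 0; 0; 0; 0; 0; 0; 0; 0; 0; 0; 0; 0; 0; 0; 0];
   [:: 15; 0; 0; 0; 0; 0; 0; 0; 0; 0; 0; 0; 0; 0; 0; 0];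
   [:: 12; 0; 0; 0; 0; 0; 0; 0; 0; 0; 0; 0; 0; 0; 0; 0];
   [:: 15; 0; 0; 0; 0; 0; 0; 0; 0; 0; 0; 0; 0; 0; 0; 0];
   [:: 15; 0; 0; 0; 0; 0; 0; 0; 0; 0; 0; 0; 0; 0; 0; 0];
   [:: 18; 0; 0; 0; 0; 0; 0; 0; 0; 0; 0; 0; 0; 0; 0; 0];
   [:: 12; 0; 0; 0; 0; 0; 0; 0; 0; 0; 0; 0; 0; 0; 0; 0];
   [:: 15; 0; 0; 0; 0; 0; 0; 0; 0; 0; 0; 0; 0; 0; 0; 0];
   [:: 15; 0; 0; 0; 0; 0; 0; 0; 0; 0; 0; 0; 0; 0; 0; 0];
   [:: 18; 0; 0; 0; 0; 0; 0; 0; 0; 0; 0; 0; 0; 0; 0; 0];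
   [:: 15; 0; 0; 0; 0; 0; 0; 0; 0; 0; 0; 0; 0; 0; 0; 0];
   [:: 18; 0; 0; 0; 0; 0; 0; 0; 0; 0; 0; 0; 0; 0; 0; 0];
   [:: 18; 0; 0; 0; 0; 0; 0; 0; 0; 0; 0; 0; 0; 0; 0; 0];
   [:: 21; 0; 0; 0; 0; 0; 0; 0; 0; 0; 0; 0; 0; 0; 0; 0]];
  [:: [:: 0; 0; 0; 0; 0; 0; 0; 0; 0; 0; 0; 0; 0; 0; 0; 0];
   [:: 0; 0; 0; 0; 0; 0; 0; 0; 0; 0; 0; 0; 0; 0; 0; 0];
   [:: 0; 0; 0; 0; 0; 0; 0; 0; 0; 0; 0; 0; 0; 0; 0; 0];
   [:: 0; 0; 0; 0; 0; 0; 0; 0; 0; 0; 0; 0; 0; 0; 0; 0];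
   [:: 0; 0; 0; 0; 0; 0; 0; 0; 0; 0; 0; 0; 0; 0; 0; 0];
   [:: 0; 0; 0; 0; 0; 0; 0; 0; 0; 0; 0; 0; 0; 0; 0; 0];
   [:: 0; 0; 0; 0; 0; 0; 0; 0; 0; 0; 0; 0; 0; 0; 0; 0];
   [:: 0; 0; 0; 0; 0; 0; 0; 0; 0; 0; 0; 0; 0; 0; 0; 0];
   [:: 0; 0; 0; 0; 0; 0; 0; 0; 0; 0; 0; 0; 0; 0; 0; 0];
   [:: 0; 0; 0; 0; 0; 0; 0; 0; 0; 0; 0; 0; 0; 0; 0; 0];
   [:: 0; 0; 0; 0; 0; 0; 0; 0; 0; 0; 0; 0; 0; 0; 0; 0];
   [:: 0; 0; 0; 0; 0; 0; 0; 0; 0; 0; 0; 0; 0; 0; 0; 0];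
   [:: 0; 0; 0; 0; 0; 0; 0; 0; 0; 0; 0; 0; 0; 0; 0; 0];
   [:: 0; 0; 0; 0; 0; 0; 0; 0; 0; 0; 0; 0; 0; 0; 0; 0];
   [:: 0; 0; 0; 0; 0; 0; 0; 0; 0; 0; 0; 0; 0; 0; 0; 0];
   [:: 0; 0; 0; 0; 0; 0; 0; 0; 0; 0; 0; 0; 0; 0; 0; 0]]];
 [:: [:: [:: 1; 4; 4; 7; 4; 7; 7; 10; 4; 7; 7; 10; 7; 10; 10; 13];
   [:: 4; 7; 7; 0; 7; 10; 10; 0; 7; 10; 10; 0; 10; 13; 13; 0];
   [:: 4; 7; 7; 10; 7; 10; 10; 0; 7; 10; 10; 13; 10; 13; 13; 0];
   [:: 7; 10; 10; 13; 10; 13; 13; 0; 10; 13; 13; 16; 13; 16; 16; 0];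
   [:: 4; 7; 7; 10; 7; 10; 10; 13; 7; 10; 10; 13; 10; 13; 0; 0];
   [:: 7; 10; 10; 0; 10; 13; 13; 0; 10; 13; 13; 0; 13; 16; 0; 0];
   [:: 7; 10; 10; 13; 10; 13; 13; 0; 10; 13; 13; 16; 13; 16; 0; 0];
   [:: 10; 13; 13; 16; 13; 16; 16; 0; 13; 16; 16; 19; 16; 19; 0; 0];
   [:: 4; 7; 7; 10; 7; 10; 10; 13; 7; 10; 10; 13; 10; 13; 13; 16];
   [:: 7; 10; 10; 0; 10; 13; 13; 0; 10; 13; 13; 0; 13; 16; 16; 0];
   [:: 7; 10; 10; 13; 10; 13; 13; 0; 10; 13; 13; 16; 13; 16; 16; 0];
   [:: 10; 13; 13; 16; 13; 16; 16; 0; 13; 16; 16; 19; 16; 19; 19; 0];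
   [:: 7; 10; 10; 13; 10; 13; 13; 16; 10; 13; 13; 16; 13; 16; 0; 0];
   [:: 10; 13; 13; 0; 13; 16; 16; 0; 13; 16; 16; 0; 16; 19; 0; 0];
   [:: 10; 13; 13; 16; 13; 16; 16; 0; 13; 16; 16; 19; 16; 19; 0; 0];
   [:: 13; 16; 16; 19; 16; 19; 19; 0; 16; 19; 19; 22; 19; 22; 0; 0]];
  [:: [:: 0; 0; 0; 0; 0; 0; 0; 0; 0; 0; 0; 0; 0; 0; 0; 0];
   [:: 0; 0; 0; 10; 0; 0; 0; 13; 0; 0; 0; 13; 0; 0; 0; 16];
   [:: 0; 0; 0; 0; 0; 0; 0; 0; 0; 0; 0; 0; 0; 0; 0; 0];
   [:: 0; 0; 0; 0; 0; 0; 0; 0; 0; 0; 0; 0; 0; 0; 0; 0];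
   [:: 0; 0; 0; 0; 0; 0; 0; 0; 0; 0; 0; 0; 0; 0; 0; 0];
   [:: 0; 0; 0; 13; 0; 0; 0; 16; 0; 0; 0; 16; 0; 0; 0; 0];
   [:: 0; 0; 0; 0; 0; 0; 0; 0; 0; 0; 0; 0; 0; 0; 0; 0];
   [:: 0; 0; 0; 0; 0; 0; 0; 0; 0; 0; 0; 0; 0; 0; 0; 0];
   [:: 0; 0; 0; 0; 0; 0; 0; 0; 0; 0; 0; 0; 0; 0; 0; 0];
   [:: 0; 0; 0; 13; 0; 0; 0; 16; 0; 0; 0; 16; 0; 0; 0; 19];
   [:: 0; 0; 0; 0; 0; 0; 0; 0; 0; 0; 0; 0; 0; 0; 0; 0];
   [:: 0; 0; 0; 0; 0; 0; 0; 0; 0; 0; 0; 0; 0; 0; 0; 0];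
   [:: 0; 0; 0; 0; 0; 0; 0; 0; 0; 0; 0; 0; 0; 0; 0; 0];
   [:: 0; 0; 0; 16; 0; 0; 0; 19; 0; 0; 0; 19; 0; 0; 0; 0];
   [:: 0; 0; 0; 0; 0; 0; 0; 0; 0; 0; 0; 0; 0; 0; 0; 0];
   [:: 0; 0; 0; 0; 0; 0; 0; 0; 0; 0; 0; 0; 0; 0; 0; 0]]];
 [:: [:: [:: 5; 8; 5; 8; 5; 8; 8; 11; 8; 11; 8; 11; 8; 11; 11; 11];
   [:: 8; 8; 8; 0; 8; 11; 11; 0; 11; 11; 11; 0; 11; 14; 14; 0];
   [:: 8; 11; 8; 11; 8; 11; 11; 0; 11; 14; 11; 14; 11; 14; 11; 0];
   [:: 11; 11; 11; 11; 11; 14; 14; 0; 14; 14; 14; 14; 14; 17; 14; 0];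
   [:: 8; 11; 8; 11; 8; 11; 11; 11; 11; 14; 11; 14; 11; 14; 0; 0];
   [:: 11; 11; 11; 0; 11; 14; 14; 0; 14; 14; 14; 0; 14; 14; 0; 0];
   [:: 11; 14; 11; 14; 11; 14; 11; 0; 14; 17; 14; 17; 14; 17; 0; 0];
   [:: 14; 14; 14; 14; 14; 17; 14; 0; 17; 17; 17; 17; 17; 17; 0; 0];
   [:: 8; 11; 8; 11; 8; 11; 11; 14; 11; 14; 11; 14; 11; 14; 11; 11];
   [:: 11; 11; 11; 0; 11; 14; 14; 0; 14; 14; 14; 0; 14; 14; 14; 0];
   [:: 11; 14; 11; 14; 11; 14; 14; 0; 14; 17; 14; 17; 14; 17; 11; 0];
   [:: 14; 14; 14; 14; 14; 17; 17; 0; 17; 17; 17; 17; 17; 17; 14; 0];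
   [:: 11; 14; 11; 14; 11; 14; 14; 14; 14; 17; 14; 17; 11; 14; 0; 0];
   [:: 14; 14; 14; 0; 14; 17; 17; 0; 17; 17; 17; 0; 14; 14; 0; 0];
   [:: 14; 17; 14; 17; 14; 17; 14; 0; 17; 20; 17; 20; 14; 17; 0; 0];
   [:: 17; 17; 17; 17; 17; 20; 17; 0; 20; 20; 20; 20; 17; 17; 0; 0]];
  [:: [:: 0; 0; 0; 0; 0; 0; 0; 0; 0; 0; 0; 0; 0; 0; 0; 0];
   [:: 0; 11; 0; 11; 0; 11; 0; 11; 0; 14; 0; 14; 0; 14; 0; 11];
   [:: 0; 0; 0; 0; 0; 0; 0; 0; 0; 0; 0; 0; 0; 0; 0; 0];
   [:: 0; 0; 0; 0; 0; 0; 0; 0; 0; 0; 0; 0; 0; 0; 0; 0];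
   [:: 0; 0; 0; 0; 0; 0; 0; 0; 0; 0; 0; 0; 0; 0; 0; 0];
   [:: 0; 14; 0; 14; 0; 14; 0; 11; 0; 17; 0; 17; 0; 17; 0; 0];
   [:: 0; 0; 0; 0; 0; 0; 0; 0; 0; 0; 0; 0; 0; 0; 0; 0];
   [:: 0; 0; 0; 0; 0; 0; 0; 0; 0; 0; 0; 0; 0; 0; 0; 0];
   [:: 0; 0; 0; 0; 0; 0; 0; 0; 0; 0; 0; 0; 0; 0; 0; 0];
   [:: 0; 14; 0; 14; 0; 14; 0; 14; 0; 17; 0; 17; 0; 17; 0; 11];
   [:: 0; 0; 0; 0; 0; 0; 0; 0; 0; 0; 0; 0; 0; 0; 0; 0];
   [:: 0; 0; 0; 0; 0; 0; 0; 0; 0; 0; 0; 0; 0; 0; 0; 0];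
   [:: 0; 0; 0; 0; 0; 0; 0; 0; 0; 0; 0; 0; 0; 0; 0; 0];
   [:: 0; 17; 0; 17; 0; 17; 0; 14; 0; 20; 0; 20; 0; 17; 0; 0];
   [:: 0; 0; 0; 0; 0; 0; 0; 0; 0; 0; 0; 0; 0; 0; 0; 0];
   [:: 0; 0; 0; 0; 0; 0; 0; 0; 0; 0; 0; 0; 0; 0; 0; 0]]];
 [:: [:: [:: 2; 5; 5; 8; 5; 8; 8; 11; 5; 8; 8; 11; 8; 11; 11; 11];
   [:: 5; 8; 8; 0; 8; 11; 11; 0; 8; 11; 11; 0; 11; 11; 14; 0];
   [:: 5; 8; 8; 11; 8; 11; 11; 0; 8; 11; 11; 14; 11; 14; 11; 0];
   [:: 8; 11; 11; 11; 11; 14; 14; 0; 11; 14; 14; 14; 14; 14; 14; 0];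
   [:: 5; 8; 8; 11; 8; 11; 11; 11; 8; 11; 11; 14; 11; 14; 0; 0];
   [:: 8; 11; 11; 0; 11; 14; 14; 0; 11; 14; 14; 0; 14; 14; 0; 0];
   [:: 8; 11; 11; 14; 11; 14; 11; 0; 11; 14; 14; 17; 14; 17; 0; 0];
   [:: 11; 14; 14; 14; 14; 17; 14; 0; 14; 17; 17; 17; 17; 17; 0; 0];
   [:: 5; 8; 8; 11; 8; 11; 11; 14; 8; 11; 11; 14; 11; 14; 11; 14];
   [:: 8; 11; 11; 0; 11; 14; 14; 0; 11; 14; 14; 0; 14; 14; 14; 0];
   [:: 8; 11; 11; 14; 11; 14; 14; 0; 11; 14; 14; 17; 14; 17; 14; 0];
   [:: 11; 14; 14; 14; 14; 17; 17; 0; 14; 17; 17; 17; 17; 17; 17; 0];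
   [:: 8; 11; 11; 14; 11; 14; 14; 14; 11; 14; 14; 17; 14; 17; 0; 0];
   [:: 11; 14; 14; 0; 14; 17; 17; 0; 14; 17; 17; 0; 17; 17; 0; 0];
   [:: 11; 14; 14; 17; 14; 17; 14; 0; 14; 17; 17; 20; 17; 20; 0; 0];
   [:: 14; 17; 17; 17; 17; 20; 17; 0; 17; 20; 20; 20; 20; 20; 0; 0]];
  [:: [:: 0; 0; 0; 0; 0; 0; 0; 0; 0; 0; 0; 0; 0; 0; 0; 0];
   [:: 0; 8; 0; 11; 0; 11; 0; 11; 0; 11; 0; 14; 0; 14; 0; 11];
   [:: 0; 0; 0; 0; 0; 0; 0; 0; 0; 0; 0; 0; 0; 0; 0; 0];
   [:: 0; 0; 0; 0; 0; 0; 0; 0; 0; 0; 0; 0; 0; 0; 0; 0];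
   [:: 0; 0; 0; 0; 0; 0; 0; 0; 0; 0; 0; 0; 0; 0; 0; 0];
   [:: 0; 11; 0; 14; 0; 14; 0; 11; 0; 14; 0; 17; 0; 17; 0; 0];
   [:: 0; 0; 0; 0; 0; 0; 0; 0; 0; 0; 0; 0; 0; 0; 0; 0];
   [:: 0; 0; 0; 0; 0; 0; 0; 0; 0; 0; 0; 0; 0; 0; 0; 0];
   [:: 0; 0; 0; 0; 0; 0; 0; 0; 0; 0; 0; 0; 0; 0; 0; 0];
   [:: 0; 11; 0; 14; 0; 14; 0; 14; 0; 14; 0; 17; 0; 17; 0; 14];
   [:: 0; 0; 0; 0; 0; 0; 0; 0; 0; 0; 0; 0; 0; 0; 0; 0];
   [:: 0; 0; 0; 0; 0; 0; 0; 0; 0; 0; 0; 0; 0; 0; 0; 0];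
   [:: 0; 0; 0; 0; 0; 0; 0; 0; 0; 0; 0; 0; 0; 0; 0; 0];
   [:: 0; 14; 0; 17; 0; 17; 0; 14; 0; 17; 0; 20; 0; 20; 0; 0];
   [:: 0; 0; 0; 0; 0; 0; 0; 0; 0; 0; 0; 0; 0; 0; 0; 0];
   [:: 0; 0; 0; 0; 0; 0; 0; 0; 0; 0; 0; 0; 0; 0; 0; 0]]];
 [:: [:: [:: 3; 6; 6; 9; 6; 9; 9; 9; 6; 9; 9; 9; 9; 12; 12; 12];
   [:: 6; 9; 9; 0; 9; 9; 12; 0; 9; 9; 12; 0; 12; 12; 15; 0];
   [:: 6; 9; 9; 12; 9; 12; 12; 0; 9; 12; 12; 12; 12; 15; 15; 0];
   [:: 9; 12; 12; 12; 12; 12; 15; 0; 12; 12; 15; 15; 15; 15; 18; 0];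
   [:: 6; 9; 9; 12; 9; 12; 12; 12; 9; 12; 12; 12; 12; 15; 0; 0];
   [:: 9; 12; 12; 0; 12; 12; 15; 0; 12; 12; 15; 0; 15; 15; 0; 0];
   [:: 9; 12; 12; 15; 12; 15; 15; 0; 12; 15; 15; 15; 15; 18; 0; 0];
   [:: 12; 15; 15; 15; 15; 15; 18; 0; 15; 15; 18; 18; 18; 18; 0; 0];
   [:: 6; 9; 9; 12; 9; 12; 12; 12; 9; 12; 12; 12; 9; 12; 12; 12];
   [:: 9; 12; 12; 0; 12; 12; 15; 0; 12; 12; 15; 0; 12; 15; 15; 0];
   [:: 9; 12; 12; 15; 12; 15; 15; 0; 12; 15; 15; 15; 12; 15; 15; 0];
   [:: 12; 15; 15; 15; 15; 15; 18; 0; 15; 15; 18; 18; 15; 18; 18; 0];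
   [:: 9; 12; 12; 15; 12; 15; 15; 15; 12; 15; 15; 15; 12; 15; 0; 0];
   [:: 12; 15; 15; 0; 15; 15; 18; 0; 15; 15; 18; 0; 15; 15; 0; 0];
   [:: 12; 15; 15; 18; 15; 18; 18; 0; 15; 18; 18; 18; 15; 18; 0; 0];
   [:: 15; 18; 18; 18; 18; 18; 21; 0; 18; 18; 21; 21; 18; 18; 0; 0]];
  [:: [:: 0; 0; 0; 0; 0; 0; 0; 0; 0; 0; 0; 0; 0; 0; 0; 0];
   [:: 0; 9; 0; 9; 0; 12; 0; 12; 0; 12; 0; 12; 0; 15; 0; 15];
   [:: 0; 0; 0; 0; 0; 0; 0; 0; 0; 0; 0; 0; 0; 0; 0; 0];
   [:: 0; 0; 0; 0; 0; 0; 0; 0; 0; 0; 0; 0; 0; 0; 0; 0];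
   [:: 0; 0; 0; 0; 0; 0; 0; 0; 0; 0; 0; 0; 0; 0; 0; 0];
   [:: 0; 12; 0; 12; 0; 15; 0; 15; 0; 15; 0; 15; 0; 18; 0; 0];
   [:: 0; 0; 0; 0; 0; 0; 0; 0; 0; 0; 0; 0; 0; 0; 0; 0];
   [:: 0; 0; 0; 0; 0; 0; 0; 0; 0; 0; 0; 0; 0; 0; 0; 0];
   [:: 0; 0; 0; 0; 0; 0; 0; 0; 0; 0; 0; 0; 0; 0; 0; 0];
   [:: 0; 12; 0; 12; 0; 15; 0; 15; 0; 15; 0; 15; 0; 15; 0; 15];
   [:: 0; 0; 0; 0; 0; 0; 0; 0; 0; 0; 0; 0; 0; 0; 0; 0];
   [:: 0; 0; 0; 0; 0; 0; 0; 0; 0; 0; 0; 0; 0; 0; 0; 0];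
   [:: 0; 0; 0; 0; 0; 0; 0; 0; 0; 0; 0; 0; 0; 0; 0; 0];
   [:: 0; 15; 0; 15; 0; 18; 0; 18; 0; 18; 0; 18; 0; 18; 0; 0];
   [:: 0; 0; 0; 0; 0; 0; 0; 0; 0; 0; 0; 0; 0; 0; 0; 0];
   [:: 0; 0; 0; 0; 0; 0; 0; 0; 0; 0; 0; 0; 0; 0; 0; 0]]];
 [:: [:: [:: 4; 7; 7; 10; 7; 10; 10; 10; 4; 7; 7; 10; 7; 10; 10; 10];
   [:: 7; 10; 10; 0; 10; 10; 13; 0; 7; 10; 10; 0; 10; 13; 13; 0];
   [:: 7; 10; 10; 10; 10; 13; 13; 0; 7; 10; 10; 13; 10; 13; 13; 0];
   [:: 10; 13; 13; 13; 13; 13; 16; 0; 10; 13; 13; 13; 13; 16; 16; 0];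
   [:: 7; 10; 10; 13; 10; 13; 10; 10; 7; 10; 10; 13; 10; 13; 0; 0];
   [:: 10; 13; 13; 0; 13; 13; 13; 0; 10; 13; 13; 0; 13; 16; 0; 0];
   [:: 10; 13; 13; 13; 13; 16; 13; 0; 10; 13; 13; 16; 13; 16; 0; 0];
   [:: 13; 16; 16; 16; 16; 16; 16; 0; 13; 16; 16; 16; 16; 19; 0; 0];
   [:: 7; 10; 10; 13; 10; 13; 13; 13; 7; 10; 10; 13; 10; 13; 13; 13];
   [:: 10; 13; 13; 0; 13; 13; 16; 0; 10; 13; 13; 0; 13; 16; 16; 0];
   [:: 10; 13; 13; 13; 13; 16; 16; 0; 10; 13; 13; 16; 13; 16; 13; 0];
   [:: 13; 16; 16; 16; 16; 16; 19; 0; 13; 16; 16; 16; 16; 19; 16; 0];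
   [:: 10; 13; 13; 16; 13; 16; 13; 13; 10; 13; 13; 16; 13; 13; 0; 0];
   [:: 13; 16; 16; 0; 16; 16; 16; 0; 13; 16; 16; 0; 16; 16; 0; 0];
   [:: 13; 16; 16; 16; 16; 19; 16; 0; 13; 16; 16; 19; 16; 16; 0; 0];
   [:: 16; 19; 19; 19; 19; 19; 19; 0; 16; 19; 19; 19; 19; 19; 0; 0]];
  [:: [:: 0; 0; 0; 0; 0; 0; 0; 0; 0; 0; 0; 0; 0; 0; 0; 0];
   [:: 0; 10; 0; 13; 0; 13; 0; 13; 0; 10; 0; 13; 0; 13; 0; 13];
   [:: 0; 0; 0; 0; 0; 0; 0; 0; 0; 0; 0; 0; 0; 0; 0; 0];
   [:: 0; 0; 0; 0; 0; 0; 0; 0; 0; 0; 0; 0; 0; 0; 0; 0];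
   [:: 0; 0; 0; 0; 0; 0; 0; 0; 0; 0; 0; 0; 0; 0; 0; 0];
   [:: 0; 13; 0; 16; 0; 16; 0; 13; 0; 13; 0; 16; 0; 16; 0; 0];
   [:: 0; 0; 0; 0; 0; 0; 0; 0; 0; 0; 0; 0; 0; 0; 0; 0];
   [:: 0; 0; 0; 0; 0; 0; 0; 0; 0; 0; 0; 0; 0; 0; 0; 0];
   [:: 0; 0; 0; 0; 0; 0; 0; 0; 0; 0; 0; 0; 0; 0; 0; 0];
   [:: 0; 13; 0; 16; 0; 16; 0; 16; 0; 13; 0; 16; 0; 16; 0; 13];
   [:: 0; 0; 0; 0; 0; 0; 0; 0; 0; 0; 0; 0; 0; 0; 0; 0];
   [:: 0; 0; 0; 0; 0; 0; 0; 0; 0; 0; 0; 0; 0; 0; 0; 0];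
   [:: 0; 0; 0; 0; 0; 0; 0; 0; 0; 0; 0; 0; 0; 0; 0; 0];
   [:: 0; 16; 0; 19; 0; 19; 0; 16; 0; 16; 0; 19; 0; 16; 0; 0];
   [:: 0; 0; 0; 0; 0; 0; 0; 0; 0; 0; 0; 0; 0; 0; 0; 0];
   [:: 0; 0; 0; 0; 0; 0; 0; 0; 0; 0; 0; 0; 0; 0; 0; 0]]]].
Definition Phi1 (p c : rowT) (o : bool) (ph : nat) : nat :=
  nth 0 (nth [::] (nth [::] (nth [::] tab ph) o) (rid c)) (rid p).
Definition Phi2 (p c : rowT) (o : bool) (ph : nat) : nat := Phi1 (mir p) (mir c) o ph.
Definition allrows : seq rowT :=
  [seq (odd i, odd i./2, odd (i %/ 4), odd (i %/ 8)) | i <- iota 0 16].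
Lemma allrowsP (r : rowT) : r \in allrows.
Proof. by case: r => [[[[] []] []] []]. Qed.
Definition check (sA sB : rowT -> bool) (Phi : rowT -> rowT -> bool -> nat -> nat) : bool :=
  [&& all (fun ph => all (fun o => all (fun p => all (fun c =>
        (Phi p c o ph == 0) || all (fun n =>
           ~~ okrow p c n || (o && sA n && sB n) ||
           ((Phi c n (nopen sA sB c n o) (nph ph) != 0) &&
            (Phi p c o ph + 3 * pcr n <= 8 + Phi c n (nopen sA sB c n o) (nph ph))))
         allrows) allrows) allrows) [:: false; true]) (iota 1 6),
      all (fun c => (Phi rempty c false 1 != 0) && (3 * pcr c + tabK <= 8 + Phi rempty c false 1)) allrows &
      all (fun o => all (fun p => all (fun c =>
        (Phi p c o 5 == 0) || ~~ okrow p c rempty || (Phi p c o 5 <= tabK + 1)) allrows) allrows) [:: false; true]].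
Lemma check1 : check r0 r1 Phi1. Proof. vm_compute. reflexivity. Qed.
Lemma check2 : check r3 r2 Phi2. Proof. vm_compute. reflexivity. Qed.


Section Cells.
Variables (h w : nat) (W : word h w).

Lemma cell_ord (a : 'I_h) (b : 'I_w) : cell W a.+1 b.+1 = W (a, b).
Proof.
rewrite /cell /=.
case: insubP => [a' _ Ha|]; last by rewrite ltn_ord.
case: insubP => [b' _ Hb|]; last by rewrite ltn_ord.
by congr (W (_, _)); apply: val_inj.
Qed.

Lemma cell0i j : cell W 0 j = false.
Proof. by rewrite /cell; case: insub => // ?; case: insub. Qed.

Lemma celli0 i : cell W i 0 = false.
Proof. by rewrite /cell; case: insub => // ?; case: insub => // ?; rewrite andbF. Qed.

Lemma cellhi i j : h < i -> cell W i j = false.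
Proof.
move=> hi; rewrite /cell; case: insubP => // a' Ha.
by move: Ha; rewrite ltnNge -ltnS prednK ?hi // (leq_ltn_trans _ hi).
Qed.

Lemma cellwj i j : w < j -> cell W i j = false.
Proof.
move=> hj; rewrite /cell; case: insub => // ?; case: insubP => // b' Hb.
by move: Hb; rewrite ltnNge -ltnS prednK ?hj // (leq_ltn_trans _ hj).
Qed.
End Cells.


Definition row h w (W : word h w) (m : nat) : rowT :=
  (cell W m 1, cell W m 2, cell W m 3, cell W m 4).

Lemma nfilledE h (W : word h 4) : nfilled W = \sum_(m < h) pcr (row W m.+1).
Proof.
rewrite /nfilled -sum1_card big_mkcond /=.
rewrite (eq_bigr (fun p => nat_of_bool (W p))); last by move=> p _; rewrite inE; case: (W p).
rewrite (eq_bigr (fun p => nat_of_bool (W (p.1, p.2)))); last by case.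
rewrite -(pair_bigA _ (fun i j => nat_of_bool (W (i, j)))) /=.
apply: eq_bigr => i _.
rewrite !big_ord_recl big_ord0 /pcr /row /r0 /r1 /r2 /r3 /=.
rewrite -[1]/(ord0 : 'I_4).+1 cell_ord.
rewrite -[2]/(lift ord0 (ord0 : 'I_3) : 'I_4).+1 cell_ord.
rewrite -[3]/(lift ord0 (lift ord0 (ord0 : 'I_2)) : 'I_4).+1 cell_ord.
rewrite -[4]/(lift ord0 (lift ord0 (lift ord0 (ord0 : 'I_1))) : 'I_4).+1 cell_ord.
by rewrite addn0 !addnA.
Qed.


Lemma sum_local (f : nat -> nat) a N : a.+2 <= N ->
  (forall i, 1 < distn a i -> f i = 0) ->
  \sum_(i < N) f i = (if a is a'.+1 then f a' else 0) + f a + f a.+1.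
Proof.
move=> hN hf.
have ext : forall M, a.+2 <= M -> \sum_(i < M) f i = \sum_(i < a.+2) f i.
  elim=> [|M IH] hM; first by [].
  case: (ltngtP M a.+1) => hMa.
  - lia.
  - rewrite big_ord_recr /= IH // hf ?addn0 //; rewrite /distn; lia.
  - by rewrite hMa.
rewrite ext // !big_ord_recr /=.
case: a hN hf ext => [|a'] hN hf ext; first by rewrite big_ord0.
rewrite big_ord_recr /= big1 ?add0n // => i _; apply: hf.
rewrite /distn; have := ltn_ord i; lia.
Qed.

Lemma distnn a : distn a a = 0. Proof. by rewrite /distn subnn. Qed.
Lemma distnS a : distn a a.+1 = 1. Proof. rewrite /distn; lia. Qed.
Lemma distSn a : distn a.+1 a = 1. Proof. rewrite /distn; lia. Qed.

Lemma degreeE h (W : word h 4) (a : 'I_h) (b : 'I_4) :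
  degree W (a, b) = cell W a b.+1 + cell W a.+2 b.+1 + cell W a.+1 b + cell W a.+1 b.+2.
Proof.
rewrite /degree -sum1_card big_mkcond /=.
pose g (i j : nat) := nat_of_bool (cell W i.+1 j.+1 && (distn a i + distn b j == 1)).
rewrite (eq_bigr (fun p : 'I_h * 'I_4 => g p.1 p.2)); last first.
  by case=> i j _; rewrite inE /g cell_ord /adjacent /=; case: (W _ && _).
rewrite -(pair_bigA _ (fun (i : 'I_h) (j : 'I_4) => g i j)) /=.
pose f i := \sum_(j < 4) g i j.
have -> : \sum_(i < h) \sum_(j < 4) g i j = \sum_(i < h.+1) f i.
  rewrite big_ord_recr /=.
  have -> : f h = 0 by rewrite /f big1 // => j _; rewrite /g cellhi.
  by rewrite addn0.
rewrite (sum_local (f := f) (a := a)); last 2 first.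
- by rewrite ltnS.
- move=> i hi; apply: big1 => j _; rewrite /g.
  case: (cell _ _ _) => //=.
  by have -> : (distn a i + distn b j == 1) = false by apply/eqP; lia.
rewrite /f /g; clear f g.
have Ha := ltn_ord a.
case: (nat_of_ord a) Ha => [|a'] Ha;
rewrite !big_ord_recl !big_ord0 /= /bump /=;
case: b => [[|[|[|[|b]]]] hb] //=;
rewrite ?distnn ?distnS ?distSn ?celli0 ?(@cellwj _ _ W _ 5) //=;
rewrite ?cell0i /distn /= ?addn0 ?add0n ?subn0 ?subnn ?addnS ?addSn ?andbF ?andbT /= ?addn0 ?add0n; lia.
Qed.


Lemma okrow_cells h (W : word h 4) a :
  okrow (row W a) (row W a.+1) (row W a.+2) <->
  (forall b, b < 4 -> cell W a.+1 b.+1 ->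
     cell W a b.+1 + cell W a.+2 b.+1 + cell W a.+1 b + cell W a.+1 b.+2 <= 2).
Proof.
rewrite /okrow /row /r0 /r1 /r2 /r3 /=.
have c0 := @celli0 _ _ W a.+1; have c5 := @cellwj _ _ W a.+1 5 (erefl _).
split.
- move=> /and4P [H1 H2 H3 H4] [|[|[|[|b]]]] // _ Hc.
  + by move: H1; rewrite Hc c0 addn0.
  + by move: H2; rewrite Hc.
  + by move: H3; rewrite Hc.
  + by move: H4; rewrite Hc c5 addn0.
- move=> H; apply/and4P; split; apply/implyP => Hc.
  + by have := H 0 erefl Hc; rewrite c0 addn0.
  + exact: H 1 erefl Hc.
  + exact: H 2 erefl Hc.
  + by have := H 3 erefl Hc; rewrite c5 addn0.
Qed.

Lemma W2_rows h (W : word h 4) :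
  in_W2 W <-> forall m, 0 < m <= h -> okrow (row W m.-1) (row W m) (row W m.+1).
Proof.
split.
- move=> /forallP HW [|a] // /andP [_ ha].
  apply/okrow_cells => b hb Hc.
  have := HW (Ordinal ha, Ordinal hb).
  by rewrite -(cell_ord W (Ordinal ha) (Ordinal hb)) /= Hc degreeE.
- move=> H; apply/forallP => [[a b]]; apply/implyP.
  rewrite -cell_ord degreeE => Hc.
  have := H a.+1; rewrite ltn_ord => /(_ erefl) /okrow_cells HH.
  exact: HH (ltn_ord b) Hc.
Qed.


Definition ph (m : nat) : nat := if m <= 3 then m else 4 + m %% 3.

Lemma ph_step m : 0 < m -> ph m.+1 = nph (ph m).
Proof.
rewrite /ph => hm.
case: m hm => [|[|[|[|m]]]] // _.
have : m.+4 %% 3 < 3 by rewrite ltn_pmod.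
case E: (m.+4 %% 3) => [|[|[|r]]] // _ /=.
- by have -> : (m.+4).+1 %% 3 = 1 by lia.
- by have -> : (m.+4).+1 %% 3 = 2 by lia.
- by have -> : (m.+4).+1 %% 3 = 0 by lia.
Qed.

Lemma ph_range m : 0 < m -> 0 < ph m <= 6.
Proof. rewrite /ph => hm; case: (leqP m 3) => H; lia. Qed.

Lemma check_step sA sB Phi p c n o q : check sA sB Phi -> 0 < q <= 6 ->
  Phi p c o q != 0 -> okrow p c n -> ~~ [&& o, sA n & sB n] ->
  Phi c n (nopen sA sB c n o) (nph q) != 0 /\
  Phi p c o q + 3 * pcr n <= 8 + Phi c n (nopen sA sB c n o) (nph q).
Proof.
move=> /and3P [H _ _] hq hP hok hb.
have hq' : q \in iota 1 6 by rewrite mem_iota; lia.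
move: H => /allP /(_ q hq') /allP /(_ o) .
have -> : o \in [:: false; true] by rewrite !inE; case: (o).
move=> /(_ isT) /allP /(_ p (@allrowsP p)) /allP /(_ c (@allrowsP c)).
rewrite (negbTE hP) orFb => /allP /(_ n (@allrowsP n)).
rewrite hok orFb.
have -> : o && sA n && sB n = false by move: hb; rewrite andbA; case: (_ && _ && _).
by move=> /andP [].
Qed.

Lemma check_init sA sB Phi c : check sA sB Phi ->
  Phi rempty c false 1 != 0 /\ 3 * pcr c + tabK <= 8 + Phi rempty c false 1.
Proof.
by move=> /and3P [_ /allP /(_ c (@allrowsP c)) /andP [] ? ? _].
Qed.

Lemma check_fin sA sB Phi p c o : check sA sB Phi ->
  Phi p c o 5 != 0 -> okrow p c rempty -> Phi p c o 5 <= tabK + 1.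
Proof.
move=> /and3P [_ _ /allP /(_ o)].
have -> : o \in [:: false; true] by rewrite !inE; case: (o).
move=> /(_ isT) /allP /(_ p (@allrowsP p)) /allP /(_ c (@allrowsP c)).
by move=> H /negbTE hP hok; move: H; rewrite hP hok.
Qed.

Section Upper.
Variables (h : nat) (W : word h 4) (jA jB : nat) (sA sB : rowT -> bool).
Variable Phi : rowT -> rowT -> bool -> nat -> nat.
Hypothesis hA : forall m, sA (row W m) = cell W m jA.
Hypothesis hB : forall m, sB (row W m) = cell W m jB.
Hypothesis hchk : check sA sB Phi.

Fixpoint opn (m : nat) : bool :=
  if m is m'.+1 then nopen sA sB (row W m') (row W m) (opn m') else false.

Lemma open_spec m : opn m -> exists i, [/\ 0 < i, i < m,
  (forall t, i <= t <= m -> cell W t jA), cell W i jB &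
  (forall t, i < t <= m -> ~~ cell W t jB)].
Proof.
elim: m => [|m IH] //= /and4P [a1 b1 a0 /orP Ho].
rewrite !hA hB in a1 a0 b1.
case: Ho => [b0|/IH [i [i0 im hAi hBi hBn]]].
- rewrite hB in b0.
  exists m; split => //.
  + by rewrite lt0n; apply/negP => /eqP m0; rewrite m0 cell0i in a0.
  + by move=> t ht; have [->|->] : t = m \/ t = m.+1 by lia.
  + by move=> t ht; have -> : t = m.+1 by lia.
- exists i; split => //; first lia.
  + move=> t ht; have [?|->] : t <= m \/ t = m.+1 by lia.
    * by apply: hAi; lia.
    * done.
  + move=> t ht; have [?|->] : t <= m \/ t = m.+1 by lia.
    * by apply: hBn; lia.
    * done.
Qed.

Lemma no_bench_step m : ~ has_bench W jA jB -> m.+1 <= h ->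
  ~~ [&& opn m, sA (row W m.+1) & sB (row W m.+1)].
Proof.
move=> nb hm; apply/negP => /and3P [/open_spec [i [i0 im hAi hBi hBn]]].
rewrite hA hB => a1 b1; apply: nb.
exists (m.+2 - i), i.
do 3 (split; first lia).
split.
  move=> t ht; have [?|->] : i + t <= m \/ i + t = m.+1 by lia.
  - by apply: hAi; lia.
  - done.
split; first done.
split; first by have -> : i + (m.+2 - i) - 1 = m.+1 by lia.
move=> t t1 t2; apply: hBn; lia.
Qed.

Definition S (m : nat) := \sum_(i < m) pcr (row W i.+1).

Lemma row0 : row W 0 = rempty.
Proof. by rewrite /row !cell0i. Qed.

Lemma invariant m : ~ has_bench W jA jB -> in_W2 W -> 0 < m <= h ->
  Phi (row W m.-1) (row W m) (opn m) (ph m) != 0 /\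
  3 * S m + tabK <= 8 * m + Phi (row W m.-1) (row W m) (opn m) (ph m).
Proof.
move=> nb /W2_rows hW.
elim: m => [|[|m] IH] // hm.
- have -> : opn 1 = false by rewrite /= /nopen (hA 0) cell0i !andbF.
  rewrite row0 /S big_ord1 /=.
  have [] := check_init (row W 1) hchk.
  by rewrite mulnC.
- have [IH1 IH2] := IH ltac:(lia).
  have hok := hW m.+1 ltac:(lia).
  have hnb := no_bench_step (m := m.+1) nb ltac:(lia).
  have [C1 C2] := check_step hchk (ph_range (ltn0Sn m)) IH1 hok hnb.
  rewrite /= -ph_step // in C1 C2.
  split => //.
  rewrite /S big_ord_recr /= -/(S m.+1).
  move: IH2 C2; rewrite /=; lia.
Qed.

Lemma upper : ~ has_bench W jA jB -> in_W2 W -> 3 < h -> h %% 3 = 1 ->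
  3 * nfilled W <= 8 * h + 1.
Proof.
move=> nb hW h3 hmod.
have hph : ph h = 5 by rewrite /ph; case: (leqP h 3) => H; lia.
have [I1 I2] := invariant nb hW (m := h) ltac:(lia).
have hok := (proj1 (W2_rows W) hW) h ltac:(lia).
rewrite hph in I1 I2.
have := check_fin hchk I1.
rewrite (_ : row W h.+1 = rempty) in hok; last by rewrite /row !cellhi.
move=> /(_ hok); rewrite nfilledE -/(S h); lia.
Qed.
End Upper.


Definition mid (r : nat) : rowT :=
  match r with 0 => (true, false, true, true) | 1 => (true, true, false, true)
  | _ => (false, true, true, false) end.
Definition prow (h m : nat) : rowT :=
  if m == 1 then (true, true, true, false)
  else if m == h then (false, true, true, true) else mid ((m - 2) %% 3).
Definition sel (b : nat) (r : rowT) : bool :=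
  match b with 0 => r0 r | 1 => r1 r | 2 => r2 r | _ => r3 r end.
Definition Wc (h : nat) : word h 4 := [ffun q : 'I_h * 'I_4 => sel q.2 (prow h q.1.+1)].

Lemma rowWc h m : 0 < m <= h -> row (Wc h) m = prow h m.
Proof.
case: m => [|a] // /andP [_ ha].
have E j (hj : j < 4) : cell (Wc h) a.+1 j.+1 = sel j (prow h a.+1).
  by rewrite (cell_ord (Wc h) (Ordinal ha) (Ordinal hj)) ffunE.
rewrite /row (E 0) // (E 1) // (E 2) // (E 3) //.
by case: (prow h _) => [[[]]].
Qed.

Lemma rowWc_out h m : (m == 0) || (h < m) -> row (Wc h) m = rempty.
Proof.
case/orP => [/eqP ->|hm]; first by rewrite /row !cell0i.
by rewrite /row !cellhi.
Qed.

Lemma prow_mid h m : 1 < m < h -> prow h m = mid ((m - 2) %% 3).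
Proof.
move=> hm; rewrite /prow.
have -> : (m == 1) = false by apply/eqP; lia.
by have -> : (m == h) = false by apply/eqP; lia.
Qed.

Lemma Wc_W2 k : 2 <= k -> in_W2 (Wc (3 * k + 1)).
Proof.
move=> hk; set h := 3 * k + 1.
apply/W2_rows => m hm.
have [->|m1] := eqVneq m 1.
  rewrite /= (rowWc_out (m := 0)) // (rowWc (m := 1)); last lia.
  rewrite (rowWc (m := 2)); last lia.
  by rewrite (prow_mid (m := 2)); [rewrite /prow|lia].
have [->|mh] := eqVneq m h.
  rewrite (rowWc_out (m := h.+1)); last by rewrite ltnSn orbT.
  rewrite (rowWc (m := h.-1)); last lia.
  rewrite (rowWc (m := h)); last lia.
  rewrite (prow_mid (m := h.-1)); last lia.
  have -> : (h.-1 - 2) %% 3 = 1 by rewrite /h; lia.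
  by rewrite /prow eqxx; have -> : (h == 1) = false by apply/eqP; lia.
have [->|mh1] := eqVneq m h.-1.
  rewrite (rowWc (m := h.-1.-1)); last lia.
  rewrite (rowWc (m := h.-1)); last lia.
  rewrite (rowWc (m := h.-1.+1)); last lia.
  rewrite (_ : h.-1.+1 = h); last lia.
  rewrite (prow_mid (m := h.-1.-1)); last lia.
  rewrite (prow_mid (m := h.-1)); last lia.
  have -> : (h.-1.-1 - 2) %% 3 = 0 by rewrite /h; lia.
  have -> : (h.-1 - 2) %% 3 = 1 by rewrite /h; lia.
  by rewrite /prow eqxx; have -> : (h == 1) = false by apply/eqP; lia.
have [->|m2] := eqVneq m 2.
  rewrite /= (rowWc (m := 1)); last lia.
  rewrite (rowWc (m := 2)); last lia.
  rewrite (rowWc (m := 3)); last lia.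
  rewrite (prow_mid (m := 2)); last lia.
  rewrite (prow_mid (m := 3)); last lia.
  by rewrite /prow.
rewrite (rowWc (m := m.-1)); last lia.
rewrite (rowWc (m := m)); last lia.
rewrite (rowWc (m := m.+1)); last lia.
rewrite (prow_mid (m := m.-1)); last lia.
rewrite (prow_mid (m := m)); last lia.
rewrite (prow_mid (m := m.+1)); last lia.
have : (m - 2) %% 3 < 3 by rewrite ltn_pmod.
case E: ((m - 2) %% 3) => [|[|[|r]]] // _.
- have -> : (m.-1 - 2) %% 3 = 2 by lia.
  by have -> : (m.+1 - 2) %% 3 = 1 by lia.
- have -> : (m.-1 - 2) %% 3 = 0 by lia.
  by have -> : (m.+1 - 2) %% 3 = 2 by lia.
- have -> : (m.-1 - 2) %% 3 = 1 by lia.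
  by have -> : (m.+1 - 2) %% 3 = 0 by lia.
Qed.

Lemma Wc_count k : 2 <= k -> nfilled (Wc (3 * k + 1)) = 8 * k + 4.
Proof.
move=> hk; set h := 3 * k + 1.
have hh : h = 3 * k + 1 by [].
clearbody h.
rewrite nfilledE.
rewrite (eq_bigr (fun i : 'I_h => pcr (prow h i.+1))); last first.
  by move=> i _; rewrite rowWc // ltn_ord.
rewrite -(big_mkord xpredT (fun i => pcr (prow h i.+1))).
have step : forall t, t <= k - 1 -> \sum_(0 <= i < 3 * t + 1) pcr (prow h i.+1) = 8 * t + 3.
  elim=> [|t IH] ht.
    by rewrite big_nat1 /prow.
  rewrite (_ : 3 * t.+1 + 1 = (3 * t + 1).+3); last lia.
  rewrite !big_nat_recr /=; try lia.
  rewrite IH; last lia.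
  rewrite !prow_mid; try lia.
  have -> : ((3 * t + 1).+1 - 2) %% 3 = 0 by lia.
  have -> : ((3 * t + 1).+2 - 2) %% 3 = 1 by lia.
  have -> : ((3 * t + 1).+3 - 2) %% 3 = 2 by lia.
  rewrite /pcr /r0 /r1 /r2 /r3 /=; lia.
rewrite {1}(_ : h = (3 * (k - 1) + 1).+3); last lia.
rewrite !big_nat_recr /=; try lia.
rewrite step //.
rewrite (prow_mid (m := (3 * (k - 1) + 1).+1)); last lia.
rewrite (prow_mid (m := (3 * (k - 1) + 1).+2)); last lia.
have -> : ((3 * (k - 1) + 1).+1 - 2) %% 3 = 0 by lia.
have -> : ((3 * (k - 1) + 1).+2 - 2) %% 3 = 1 by lia.
rewrite /prow.
have -> : ((3 * (k - 1) + 1).+3 == 1) = false by apply/eqP; lia.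
have -> : ((3 * (k - 1) + 1).+3 == h) by apply/eqP; lia.
rewrite /pcr /r0 /r1 /r2 /r3 /=; lia.
Qed.


Theorem mainTheorem17 (k : nat) (W : word (3 * k + 1) 4) :
  2 <= k -> two_full W -> has_bench W 1 2 /\ has_bench W 4 3.
Proof.
move=> hk [hW hmax].
have lb := hmax _ (Wc_W2 hk); rewrite Wc_count // in lb.
have h3 : 3 < 3 * k + 1 by lia.
have hm : (3 * k + 1) %% 3 = 1 by lia.
split; apply: NNPP => nb.
- have := @upper _ W 1 2 r0 r1 Phi1 (fun m => erefl) (fun m => erefl) check1 nb hW h3 hm.
  lia.
- have := @upper _ W 4 3 r3 r2 Phi2 (fun m => erefl) (fun m => erefl) check2 nb hW h3 hm.
  lia.
Qed.
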